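(* For all $\Psi\in D(H'_{\mathrm{kin}})$, $$\lim_{R\to\infty}\Big(2\sum_{k\in\overline B(0,R)\cap\mathbb Z^3_*}\sum_{p\in L_k}\lambda_{k,p}b_{k,p}^*b_{k,p}\Psi\Big)=\mathcal N_EH'_{\mathrm{kin}}\Psi.$$
   Context: For $k_F>0$ let $B_F=\overline B(0,k_F)\cap\mathbb Z^3$, $B_F^c=\mathbb Z^3\setminus B_F$, $N=|B_F|$, $\mathbb Z^3_*=\mathbb Z^3\setminus\{0\}$, $\mathcal H_N=\bigwedge^NL^2(\mathbb T^3)$ with $\mathbb T^3=[0,2\pi]^3$, and $c_p,c_p^*$ the fermionic annihilation/creation operators of $u_p(x)=(2\pi)^{-3/2}e^{ip\cdot x}$. On $\mathcal H_N$ let $H'_{\mathrm{kin}}=\sum_{p\in B_F^c}|p|^2c_p^*c_p-\sum_{p\in B_F}|p|^2c_pc_p^*$ with domain $D(H'_{\mathrm{kin}})=\bigwedge^NH^2(\mathbb T^3)$, and $\mathcal N_E=\sum_{p\in B_F^c}c_p^*c_p$. For $k\in\mathbb Z^3_*$: $L_k=\{p\in\mathbb Z^3:|p-k|\le k_F<|p|\}$, $\lambda_{k,p}=\tfrac12(|p|^2-|p-k|^2)$, $b_{k,p}=c_{p-k}^*c_p$. *)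

(* Defs.v *)
From HB Require Import structures.
From mathcomp Require Import all_boot all_order all_algebra.
From mathcomp Require Import finmap.
From mathcomp Require Import all_classical all_reals all_analysis.
From mathcomp Require Import complex.
Set Implicit Arguments. Unset Strict Implicit. Unset Printing Implicit Defensive.
Import Order.TTheory GRing.Theory Num.Theory.
Local Open Scope classical_set_scope.
Local Open Scope fset_scope.
Local Open Scope ring_scope.
Local Open Scope complex_scope.

Definition Z3 := (int * int * int)%type.
Definition z3zero : Z3 := (0, 0, 0).
Definition z3sub (p k : Z3) : Z3 := (p.1.1 - k.1.1, p.1.2 - k.1.2, p.2 - k.2).
Definition sqn (p : Z3) : int := p.1.1 ^+ 2 + p.1.2 ^+ 2 + p.2 ^+ 2.

(* strict lexicographic order on Z^3: used to fix the sign convention of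
   Slater determinants |S> = c*_{q1} ... c*_{qn} |0>, q1 < ... < qn *)
Definition ltlex (q p : Z3) : bool :=
  (q.1.1 < p.1.1) || ((q.1.1 == p.1.1) &&
  ((q.1.2 < p.1.2) || ((q.1.2 == p.1.2) && (q.2 < p.2)))).

Section Fock.
Variable R : realType.
Local Notation C := R[i].

Definition znorm (p : Z3) : R := Num.sqrt ((sqn p)%:~R).
Definition csq (z : C) : R := (@complex.Re R z) ^+ 2 + (@complex.Im R z) ^+ 2.

(* Fermionic Fock space over L^2(T^3), written in the occupation-number basis
   of the plane waves u_p: a vector is the family of its coefficients
   psi(S) on the Slater determinants |S>, S a finite subset of Z^3.
   (All operators below act coefficientwise; square summability is imposed
   separately.) *)
Definition Fock := {fset Z3} -> C.

Definition fsign (p : Z3) (S : {fset Z3}) : C :=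
  (-1) ^+ #|` [fset q in S | ltlex q p]|.

Definition cop (p : Z3) (psi : Fock) : Fock := fun T =>
  if p \in T then 0 else fsign p T * psi (p |` T).
Definition cstar (p : Z3) (psi : Fock) : Fock := fun T =>
  if p \in T then fsign p (T `\ p) * psi (T `\ p) else 0.

Definition supp_sum (I : choiceType) (A : set I) (F : I -> C) : C :=
  (\sum_(i \in A `&` [set i | F i != 0]) F i)%R.

Variable kF : R.

Definition BF : set Z3 := [set p | znorm p <= kF].
Definition Npart : nat := #|` fset_set BF|.

Definition Hkin (psi : Fock) : Fock := fun T =>
  supp_sum (~` BF) (fun p => ((sqn p)%:~R : R)%:C * cstar p (cop p psi) T)
  - supp_sum BF (fun p => ((sqn p)%:~R : R)%:C * cop p (cstar p psi) T).

Definition NE (psi : Fock) : Fock := fun T =>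
  supp_sum (~` BF) (fun p => cstar p (cop p psi) T).

Definition Lset (k : Z3) : set Z3 :=
  [set p | znorm (z3sub p k) <= kF /\ kF < znorm p].
Definition lam (k p : Z3) : R := ((sqn p)%:~R - (sqn (z3sub p k))%:~R) / 2.
Definition bop (k p : Z3) (psi : Fock) : Fock := cstar (z3sub p k) (cop p psi).
Definition bstar (k p : Z3) (psi : Fock) : Fock := cstar p (cop (z3sub p k) psi).

Definition Kball (r : R) : set Z3 := [set k | k <> z3zero /\ znorm k <= r].

Definition Lsum (r : R) (psi : Fock) : Fock := fun T =>
  2 * (\sum_(k \in Kball r) \sum_(p \in Lset k)
          (lam k p)%:C * bstar k p (bop k p psi) T)%R.

Definition kinw (S : {fset Z3}) : R := (\sum_(p <- S) (sqn p)%:~R)%R.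

(* D(H'_kin) = wedge^N H^2(T^3): N-particle vectors with
   sum_S (1 + sum_{p in S}|p|^2)^2 |psi(S)|^2 < oo *)
Definition in_domH (psi : Fock) : Prop :=
  (forall S, psi S != 0 -> #|` S| = Npart) /\
  (\esum_(S in [set: {fset Z3}]) (((1 + kinw S) ^+ 2 * csq (psi S))%:E) < +oo)%E.

Definition sqnorm (psi : Fock) : \bar R :=
  (\esum_(S in [set: {fset Z3}]) (csq (psi S))%:E)%E.

End Fock.

(* Main.v *)
Require Import Defs.
From HB Require Import structures.
From mathcomp Require Import all_boot all_order all_algebra.
From mathcomp Require Import finmap.
From mathcomp Require Import all_classical all_reals all_analysis.
From mathcomp Require Import complex.
From mathcomp Require Import ring lra zify.
Set Implicit Arguments. Unset Strict Implicit. Unset Printing Implicit Defensive.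
Import Order.TTheory GRing.Theory Num.Theory.
Local Open Scope classical_set_scope.
Local Open Scope ring_scope.
Section S.
Variable R : realType.
Local Open Scope fset_scope.

Lemma fsign2 p S : fsign R p S * fsign R p S = 1.
Proof. by rewrite /fsign -exprMn mulrNN mulr1 expr1n. Qed.

Lemma G1 p (phi : Fock R) T : cstar p (cop p phi) T = if p \in T then phi T else 0.
Proof.
rewrite /cstar /cop; case: ifP => pT //.
by rewrite in_fsetD1 eqxx /= (fsetD1K pT) mulrA fsign2 mul1r.
Qed.

Lemma G2 p (phi : Fock R) T : cop p (cstar p phi) T = if p \in T then 0 else phi T.
Proof.
rewrite /cop /cstar; case: ifP => pT //.
by rewrite fsetU11 fsetU1K ?pT // mulrA fsign2 mul1r.
Qed.

Lemma G3 p q (phi : Fock R) T : q != p ->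
  cstar p (cop q (cstar q (cop p phi))) T = if (p \in T) && (q \notin T) then phi T else 0.
Proof.
move=> qp; rewrite {1}/cstar; case: ifP => pT //=.
rewrite G2 in_fsetD1 qp /=; case: ifP => qT /=; first by rewrite mulr0.
by rewrite /cop in_fsetD1 eqxx /= fsetD1K // mulrA fsign2 mul1r.
Qed.
End S.

Section S2.
Variable R : realType.
Local Open Scope fset_scope.
Lemma FS (I : choiceType) (A : set I) (F : I -> R[i]) (S : {fset I}) :
  (forall i, A i -> i \notin S -> F i = 0) ->
  (\sum_(i \in A) F i)%R = (\sum_(i <- S) (if i \in A then F i else 0))%R.
Proof.
move=> h; rewrite fsbig_mkcond (fsbigTE S) //.
move=> i iS; rewrite /patch; case: ifP => // /set_mem Ai; exact: h.
Qed.

Lemma SS (I : choiceType) (A : set I) (F : I -> R[i]) (S : {fset I}) :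
  (forall i, A i -> i \notin S -> F i = 0) ->
  supp_sum A F = (\sum_(i <- S) (if i \in A then F i else 0))%R.
Proof.
move=> h; rewrite /supp_sum (fsbig_widen _ A).
- exact: FS.
- by move=> i [].
- move=> i [Ai /not_andP [//|]] /= /negP; by rewrite negbK => /eqP.
Qed.
End S2.

Section Tail.
Variable R : realType.

Lemma esum_split_le (T : choiceType) (A : set T) (a : T -> \bar R) :
  (forall x, (0 <= a x)%E) ->
  (\esum_(x in [set: T] `&` A) a x <= \esum_(x in [set: T]) a x)%E.
Proof.
move=> a0; rewrite (esumID A [set: T]) //.
by rewrite leeDl //; apply: esum_ge0.
Qed.

Lemma tail (T : choiceType) (G : T -> R) (f : R -> T -> R) (Mf : T -> R) :
  (forall r x, 0 <= f r x <= G x) ->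
  (\esum_(x in [set: T]) (G x)%:E < +oo)%E ->
  (forall r x, Mf x < r -> f r x = 0) ->
  (\esum_(x in [set: T]) (f r x)%:E) @[r --> +oo] --> 0%E.
Proof.
move=> hfG hG hM.
have G0 x : 0 <= G x by have /andP[h1 h2] := hfG 0 x; exact: le_trans h1 h2.
have f0 r x : 0 <= f r x by have /andP[] := hfG r x.
set s := esum [set: T] (fun x => (G x)%:E) in hG *.
have s0 : (0 <= s)%E by apply: esum_ge0 => x _; rewrite lee_fin.
have sfin : s \is a fin_num by rewrite ge0_fin_numE.
have finA (g : T -> R) (A : set T) : (forall x, 0 <= g x <= G x) ->
    \esum_(x in [set: T] `&` A) (g x)%:E \is a fin_num.
  move=> hg; rewrite ge0_fin_numE; last by apply: esum_ge0 => x _; rewrite lee_fin; case/andP: (hg x).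
  apply: (le_lt_trans _ hG).
  have := @esum_split_le _ A (fun x => (G x)%:E) (fun x => G0 x).
  apply: le_trans.
  by apply: le_esum => x _; rewrite lee_fin; case/andP: (hg x).
have finT r : \esum_(x in [set: T]) (f r x)%:E \is a fin_num.
  by rewrite -(setTI [set: T]); apply: finA.
apply/fine_cvgP; split; first by apply: nearW => r; exact: finT.
apply/cvgrPdist_le => e e0.
have [y [X [finX _] <-] hy] := ub_ereal_sup_adherent e0 sfin.
pose M := \sum_(x <- fset_set X) `|Mf x|.
exists M; split; first by rewrite num_real.
move=> r Mr.
have hX : \esum_(x in [set: T] `&` X) (f r x)%:E = 0%E.
  apply: esum1 => x [_ Xx]; rewrite (hM r x) //.
  apply: (le_lt_trans _ Mr); apply: (le_trans (ler_norm _)).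
  rewrite /M (bigD1_seq x) ?fset_uniq ?in_fset_set ?inE //=.
  by rewrite lerDl sumr_ge0.
have hsplit := esumID X [set: T] (fun x => (f r x)%:E) (fun x _ => f0 r x).
rewrite /= hX add0e in hsplit. rewrite /= hsplit.
have h1 := esumID X [set: T] (fun x => (G x)%:E) (fun x _ => G0 x).
rewrite /= in h1.
have h2 : (\sum_(x \in X) (G x)%:E <= \esum_(x in [set: T] `&` X) (G x)%:E)%E.
  by apply: esum_ge; exists X => //; split.
have h3 : (\esum_(x in [set: T] `&` ~` X) (f r x)%:E <= \esum_(x in [set: T] `&` ~` X) (G x)%:E)%E.
  by apply: le_esum => x _; rewrite lee_fin; case/andP: (hfG r x).
have h4 : (0 <= \esum_(x in [set: T] `&` ~` X) (f r x)%:E)%E.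
  by apply: esum_ge0 => x _; rewrite lee_fin.
have fa : \esum_(x in [set: T] `&` X) (G x)%:E \is a fin_num.
  by apply: finA => x; rewrite G0 lexx.
have fb : \esum_(x in [set: T] `&` ~` X) (G x)%:E \is a fin_num.
  by apply: finA => x; rewrite G0 lexx.
have fc : \esum_(x in [set: T] `&` ~` X) (f r x)%:E \is a fin_num.
  by apply: finA.
have h5 : (s - e%:E < \esum_(x in [set: T] `&` X) (G x)%:E)%E := lt_le_trans hy h2.
have h1' : s = (\esum_(x in [set: T] `&` X) (G x)%:E + \esum_(x in [set: T] `&` ~` X) (G x)%:E)%E := h1.
move: h1' h3 h4 h5.
move: (fineK fa) (fineK fb) (fineK fc) (fineK sfin).
move: (fine (\esum_(x in [set: T] `&` X) (G x)%:E)) => a <-.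
move: (fine (\esum_(x in [set: T] `&` ~` X) (G x)%:E)) => b <-.
move: (fine (\esum_(x in [set: T] `&` ~` X) (f r x)%:E)) => c <-.
move: (fine s) => s' <-.
move=> h6 h3 h4 h5 /=.
rewrite -EFinD in h6; move: h6 => [h6].
rewrite -EFinB lte_fin in h5; rewrite lee_fin in h3.
have h4' : 0 <= c by rewrite -lee_fin.
rewrite sub0r normrN ger0_norm //.
lra.
Qed.

Lemma esum_scale_lt (T : choiceType) (g : T -> R) (K : R) :
  0 <= K -> (forall x, 0 <= g x) ->
  (\esum_(x in [set: T]) (g x)%:E < +oo)%E ->
  (\esum_(x in [set: T]) (K * g x)%:E < +oo)%E.
Proof.
move=> K0 g0 hg.
have gfin : \esum_(x in [set: T]) (g x)%:E \is a fin_num.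
  by rewrite ge0_fin_numE //; apply: esum_ge0 => x _; rewrite lee_fin.
apply: (@le_lt_trans _ _ (K%:E * \esum_(x in [set: T]) (g x)%:E)%E); last first.
  by rewrite -(fineK gfin) -EFinM ltry.
apply: ge_ereal_sup => _ [X [finX _] <-].
rewrite fsbig_finite //=.
under eq_bigr do rewrite EFinM.
rewrite -ge0_sume_distrr; last by move=> x _; rewrite lee_fin.
apply: lee_wpmul2l; first by rewrite lee_fin.
rewrite -fsbig_finite //; apply: esum_ge; exists X => //.
Qed.
End Tail.

Section Fin.
Variables (R : realType) (kF : R).

Lemma sqn_ge0 p : (0 <= sqn p)%R.
Proof. by rewrite /sqn !addr_ge0 // sqr_ge0. Qed.

Lemma znorm_sqr p : znorm R p ^+ 2 = (sqn p)%:~R.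
Proof. by rewrite /znorm sqr_sqrtr // ler0z sqn_ge0. Qed.

Lemma znorm_ge0 p : 0 <= znorm R p.
Proof. exact: sqrtr_ge0. Qed.

Lemma finBF : finite_set (BF kF).
Proof.
set n := Num.Def.archi_bound `|kF|.
have hn : `|kF| < n%:R := archi_boundP (normr_ge0 kF).
pose I := [set (i%:Z - n%:Z) | i in `I_(2 * n)%N].
have finI : finite_set I by apply: finite_image; exact: finite_II.
apply: (@sub_finite_set _ _ ((I `*` I) `*` I)); last by apply: finite_setX => //; apply: finite_setX.
have inI (z : int) : (- n%:Z < z < n%:Z) -> I z.
  move=> /andP[h1 h2]; exists (absz (z + n%:Z)); rewrite /=.
    lia.
  lia.
move=> [[a b] c] /= hp.
have h : (sqn (a, b, c) < (n * n)%N%:Z).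
  rewrite -(ltr_int R) -znorm_sqr PoszM.
  rewrite rmorphM /=.
  have := znorm_ge0 (a, b, c).
  have : kF <= `|kF| := ler_norm kF.
  move: hp; rewrite /BF /=.
  move: (znorm R (a, b, c)) => z. 
  have : 0 <= `|kF| := normr_ge0 kF.
  have hn2 : `|kF| < n%:~R := hn.
  move=> *. nra.
rewrite /sqn /= !expr2 in h.
have ha : 0 <= b * b by rewrite -expr2 sqr_ge0.
have hb : 0 <= c * c by rewrite -expr2 sqr_ge0.
have hc : 0 <= a * a by rewrite -expr2 sqr_ge0.
split; [split|]; apply: inI; apply/andP; split; nia.
Qed.
End Fin.

Lemma z3subK p k : z3sub p (z3sub p k) = k.
Proof.
case: p k => [[a b] c] [[x y] z]; rewrite /z3sub /=; congr (_,_,_); lia.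
Qed.

Lemma z3sub_eq0 p q : (z3sub p q == z3zero) = (p == q).
Proof.
case: p q => [[a b] c] [[x y] z]; rewrite /z3sub /z3zero /=.
apply/eqP/eqP => [[h1 h2 h3]|[-> -> ->]]; last by rewrite !subrr.
congr (_,_,_); lia.
Qed.

Section M.
Variables (R : realType) (kF : R).
Hypothesis finBF : finite_set (BF kF).
Local Notation Bs := (fset_set (BF kF)).
Local Notation w p := (((sqn p)%:~R : R)).

Lemma inBF p : (p \in BF kF) = (p \in Bs).
Proof. by rewrite in_fset_set. Qed.

Lemma inBs p : (p \in Bs) = (znorm R p <= kF).
Proof. rewrite -inBF; apply/idP/idP => [/set_mem //|h]; exact: mem_set. Qed.

Lemma inBFC p : (p \in ~` BF kF) = (p \notin Bs).
Proof. by rewrite in_setC inBF. Qed.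

Lemma memKball k r : (k \in Kball r) = (k != z3zero) && (znorm R k <= r).
Proof.
apply/idP/idP => [/set_mem [h1 h2]|/andP [h1 h2]]; last by apply: mem_set; split => //; apply/eqP.
by rewrite h2 andbT; apply/eqP.
Qed.

Lemma memLset k p : (p \in Lset kF k) = (znorm R (z3sub p k) <= kF) && (kF < znorm R p).
Proof.
apply/idP/idP => [/set_mem [h1 h2]|/andP [h1 h2]]; last by apply: mem_set.
by rewrite h1 h2.
Qed.

End M.

Unset Implicit Arguments.

Section Coef.
Variables (R : realType) (kF : R).
Local Open Scope complex_scope.
Local Notation Bs := (fset_set (BF kF)).
Local Notation w p := (((sqn p)%:~R : R)).
Let fin := finBF kF.

Definition aout (T : {fset Z3}) : R := \sum_(p <- T | p \notin Bs) w p.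
Definition ahole (T : {fset Z3}) : R := \sum_(q <- Bs | q \notin T) w q.
Definition eout (T : {fset Z3}) : R := \sum_(p <- T | p \notin Bs) 1.

Lemma Hkin_eq (psi : Fock R) T :
  Hkin kF psi T = (aout T - ahole T)%:C * psi T.
Proof.
rewrite /Hkin (@SS _ _ _ _ T); last by move=> p _ pT; rewrite G1 (negbTE pT) mulr0.
rewrite (@SS _ _ _ _ Bs); last by move=> p /mem_set; rewrite inBF // => ->.
rewrite rmorphB /= mulrBl /aout /ahole !rmorph_sum !mulr_suml.
congr (_ - _); rewrite [RHS]big_mkcond /=; apply: eq_big_seq => p pT.
  by rewrite G1 pT (inBFC fin); case: ifP => _; rewrite ?mulr1 ?mul0r.
by rewrite G2 (inBF fin) pT; case: ifP => _; rewrite ?mulr0 ?mul0r.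
Qed.

Lemma NE_eq (phi : Fock R) T : NE kF phi T = (eout T)%:C * phi T.
Proof.
rewrite /NE (@SS _ _ _ _ T); last by move=> p _ pT; rewrite G1 (negbTE pT).
rewrite /eout rmorph_sum mulr_suml [RHS]big_mkcond /=; apply: eq_big_seq => p pT.
by rewrite G1 pT (inBFC fin); case: ifP => _; rewrite ?mul1r ?mul0r.
Qed.


Lemma z3sub_neq k p : k <> z3zero -> z3sub p k != p.
Proof.
move=> k0; apply/negP => /eqP h; apply: k0.
have := z3subK p k; rewrite h => <-; apply/eqP; rewrite z3sub_eq0.
exact: eqxx.
Qed.

Lemma two_half (x : R) (z : R[i]) : 2 * ((x / 2)%:C * z) = x%:C * z.
Proof.
rewrite mulrA; congr (_ * _).
rewrite -[2 : R[i]]/(2%:R) -(rmorph_nat (real_complex R)) -rmorphM /=.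
by rewrite mulrC divfK // pnatr_eq0.
Qed.

Definition Ld (r : R) (T : {fset Z3}) : R :=
  \sum_(p <- T) \sum_(q <- Bs)
    (if (p \notin Bs) && (q \notin T) && (znorm R (z3sub p q) <= r)
     then w p - w q else 0).

Lemma Lsum_eq (psi : Fock R) T r : Lsum kF r psi T = (Ld r T)%:C * psi T.
Proof.
rewrite /Lsum.
pose h (k p : Z3) : R[i] := if p \in Lset kF k then (lam R k p)%:C *
   (if z3sub p k \notin T then psi T else 0) else 0.
pose SK := [fset z3sub p q | p in T, q in Bs]%fset.
have hSK p k : p \in T -> p \in Lset kF k -> k \in SK.
  move=> pT; rewrite memLset => /andP [h1 _].
  apply/imfset2P; exists p => //; exists (z3sub p k); last by rewrite z3subK.
  by rewrite /= (inBs fin).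
have e1 : \sum_(k \in Kball r) \sum_(p \in Lset kF k)
     (lam R k p)%:C * bstar k p (bop k p psi) T =
   \sum_(k <- SK) (if k \in Kball r then \sum_(p <- T) h k p else 0).
  rewrite (@FS _ _ _ _ SK).
    apply: eq_big_seq => k _; case: ifP => // /set_mem [k0 _].
    rewrite (@FS _ _ _ _ T).
      apply: eq_big_seq => p pT.
      rewrite /h /bstar /bop G3; [by rewrite pT | exact: z3sub_neq].
    move=> p _ pT; rewrite /bstar /bop G3; last exact: z3sub_neq.
    by rewrite (negbTE pT) /= mulr0.
  move=> k [k0 _] kSK; apply: fsbig1 => p pL.
  rewrite /bstar /bop G3; last exact: z3sub_neq.
  case: (boolP (p \in T)) => pT /=; last by rewrite mulr0.
  by move: kSK; rewrite (hSK p k pT (mem_set pL)).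
rewrite e1.
have e2 : \sum_(k <- SK) (if k \in Kball r then \sum_(p <- T) h k p else 0) =
   \sum_(p <- T) \sum_(k <- SK) (if k \in Kball r then h k p else 0).
  rewrite [RHS]exchange_big; apply: eq_bigr => k _; case: ifP => _ //.
  by rewrite big1.
rewrite e2.
have e3 p : p \in T -> \sum_(k <- SK) (if k \in Kball r then h k p else 0) =
   \sum_(q <- Bs) (if z3sub p q \in Kball r then h (z3sub p q) p else 0).
  move=> pT.
  rewrite -(fsbigTE SK (fun k => if k \in Kball r then h k p else 0)); last first.
    move=> k kSK; case: ifP => // _; rewrite /h; case: ifP => // pL.
    by move: kSK; rewrite (hSK p k pT pL).
  rewrite (reindex_fsbigT (fun q => z3sub p q)); last first.
    by exists (fun k => z3sub p k) => x; rewrite z3subK.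
  apply: fsbigTE => q qB; case: ifP => // _.
  by rewrite /h memLset z3subK -(inBs fin) (negbTE qB).
rewrite (eq_big_seq _ e3).
rewrite /Ld rmorph_sum mulr_suml mulr_sumr; apply: eq_big_seq => p pT.
rewrite rmorph_sum mulr_suml mulr_sumr; apply: eq_big_seq => q qB.
rewrite /h memKball memLset z3subK z3sub_eq0 -(inBs fin) qB /= /lam z3subK.
rewrite (_ : (kF < znorm R p) = (p \notin Bs)); last by rewrite (inBs fin) ltNge.
have [epq|npq] := eqVneq p q.
  by rewrite epq qB /= mulr0 rmorph0 mul0r.
case pB: (p \in Bs) => /=; first by rewrite if_same mulr0 rmorph0 mul0r.
case: (q \in T) => /=; case: (_ <= r) => /=; rewrite ?mulr0 ?rmorph0 ?mul0r //.
exact: two_half.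
Qed.


Definition Ex (r : R) (T : {fset Z3}) : R :=
  \sum_(p <- T) \sum_(q <- Bs)
    (if (p \notin Bs) && (q \notin T) && ~~ (znorm R (z3sub p q) <= r)
     then w p - w q else 0).

Definition Lfull (T : {fset Z3}) : R :=
  \sum_(p <- T) \sum_(q <- Bs)
    (if (p \notin Bs) && (q \notin T) then w p - w q else 0).

Lemma Ld_split r T : Ld r T = Lfull T - Ex r T.
Proof.
rewrite /Ld /Lfull /Ex -sumrB; apply: eq_bigr => p _.
rewrite -sumrB; apply: eq_bigr => q _.
by case: (p \notin Bs); case: (q \notin T); case: (_ <= r); rewrite /= ?subr0 ?subrr.
Qed.

Lemma sum_const_l (s : seq Z3) (P : pred Z3) (c : R) :
  \sum_(i <- s | P i) c = (\sum_(i <- s | P i) 1) * c.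
Proof. by rewrite mulr_suml; apply: eq_bigr => *; rewrite mul1r. Qed.

Lemma sum1_fset (A : {fset Z3}) (P : pred Z3) :
  \sum_(p <- A | P p) (1 : R) = (#|` [fset p in A | P p]%fset|)%:R.
Proof. by rewrite big_fset_condE card_fset_sum1 natr_sum. Qed.

Lemma card_eq T : #|` T| = #|` Bs| ->
  #|` [fset p in T | p \notin Bs]%fset| = #|` [fset q in Bs | q \notin T]%fset|.
Proof.
move=> hc.
have e1 : [fset p in T | p \notin Bs]%fset = (T `\` Bs)%fset.
  by apply/fsetP => x; rewrite !inE andbC.
have e2 : [fset p in Bs | p \notin T]%fset = (Bs `\` T)%fset.
  by apply/fsetP => x; rewrite !inE andbC.
rewrite e1 e2; have := cardfsID Bs T; have := cardfsID T Bs.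
rewrite fsetIC; lia.
Qed.

Lemma Lfull_eq T : #|` T| = #|` Bs| -> Lfull T = eout T * (aout T - ahole T).
Proof.
move=> hc.
have -> : Lfull T = \sum_(p <- T | p \notin Bs) \sum_(q <- Bs | q \notin T) (w p - w q).
  rewrite /Lfull [RHS]big_mkcond; apply: eq_bigr => p _.
  case: (p \notin Bs) => /=; last by rewrite big1.
  by rewrite [RHS]big_mkcond.
under eq_bigr do rewrite sumrB sum_const_l.
rewrite sumrB -mulr_sumr (sum_const_l _ _ (\sum_(q <- Bs | q \notin T) w q)) /eout /aout /ahole.
rewrite !sum1_fset card_eq //; ring.
Qed.

Lemma D_eq (psi : Fock R) T r : #|` T| = #|` Bs| ->
  Lsum kF r psi T - NE kF (Hkin kF psi) T = (- Ex r T)%:C * psi T.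
Proof.
move=> hc; rewrite Lsum_eq NE_eq Hkin_eq mulrA -rmorphM -mulrBl -rmorphB.
congr (_%:C * _); rewrite Ld_split Lfull_eq //; ring.
Qed.

Lemma D_eq0 (psi : Fock R) T r : psi T = 0 ->
  Lsum kF r psi T - NE kF (Hkin kF psi) T = 0.
Proof. by move=> h; rewrite Lsum_eq NE_eq Hkin_eq h !mulr0 subrr. Qed.

Lemma w_ge0 p : 0 <= w p.
Proof. by rewrite ler0z sqn_ge0. Qed.

Lemma kinw_ge0 T : 0 <= kinw R T.
Proof. by apply: sumr_ge0 => p _; exact: w_ge0. Qed.

Lemma Ex_ge0 r T : 0 <= Ex r T.
Proof.
apply: sumr_ge0 => p _; rewrite big_seq; apply: sumr_ge0 => q qB.
case: ifP => // /andP [/andP [pB _] _]; rewrite subr_ge0 -!znorm_sqr.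
move: qB pB; rewrite !(inBs fin) -ltNge => hq hp.
have := znorm_ge0 R q; nra.
Qed.

Lemma Ex_le r T : Ex r T <= (#|` Bs|)%:R * kinw R T.
Proof.
rewrite /kinw mulr_sumr; apply: ler_sum => p _.
apply: (@le_trans _ _ (\sum_(q <- Bs) w p)).
  apply: ler_sum => q _; case: ifP => _; last exact: w_ge0.
  have := w_ge0 q; lra.
by rewrite sum_const_l card_fset_sum1 natr_sum.
Qed.

Lemma le_sum_seq (s : seq Z3) (F : Z3 -> R) x : uniq s -> x \in s ->
  (forall y, 0 <= F y) -> F x <= \sum_(y <- s) F y.
Proof. by move=> us xs F0; rewrite (bigD1_seq x) //= lerDl sumr_ge0. Qed.

Definition Mf (T : {fset Z3}) : R :=
  \sum_(p <- T) \sum_(q <- Bs) znorm R (z3sub p q).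

Lemma Ex_zero r T : Mf T < r -> Ex r T = 0.
Proof.
move=> hr; rewrite /Ex big_seq big1 // => p pT; rewrite big_seq big1 // => q qB.
suff -> : znorm R (z3sub p q) <= r by rewrite andbF.
apply: ltW; apply: le_lt_trans hr; rewrite /Mf.
apply: (@le_trans _ _ (\sum_(q' <- Bs) znorm R (z3sub p q'))).
  by apply: (@le_sum_seq _ (fun q0 => znorm R (z3sub p q0))) => //; [exact: fset_uniq | move=> y; exact: znorm_ge0].
apply: (@le_sum_seq _ (fun p => \sum_(q0 <- Bs) znorm R (z3sub p q0))) => //.
  exact: fset_uniq.
by move=> y; apply: sumr_ge0 => *; exact: znorm_ge0.
Qed.

End Coef.

Lemma csq_ge0 (R : realType) (z : R[i]) : 0 <= csq z.
Proof. by rewrite /csq addr_ge0 // sqr_ge0. Qed.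

Lemma csqM (R : realType) (x : R) (z : R[i]) : csq ((x%:C)%C * z) = x ^+ 2 * csq z.
Proof. case: z => a b; rewrite /csq /=; ring. Qed.


Theorem mainTheorem15 (R : realType) (kF : R) (hkF : 0 < kF)
  (psi : Fock R) (hpsi : in_domH kF psi) :
  (sqnorm (fun T => Lsum kF r psi T - NE kF (Hkin kF psi) T)) @[r --> +oo]
    --> 0%E.
Proof.
have fin := finBF kF.
case: hpsi => hcard hsum.
pose n : R := (#|` fset_set (BF kF)|)%:R.
have n0 : 0 <= n by rewrite /n ler0n.
rewrite /sqnorm.
apply: (@tail R _ (fun T => n ^+ 2 * ((1 + kinw R T) ^+ 2 * csq (psi T)))
   (fun r T => csq (Lsum kF r psi T - NE kF (Hkin kF psi) T)) (Mf R kF)).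
- move=> r T; rewrite csq_ge0 /=.
  have [h|h] := eqVneq (psi T) 0.
    rewrite (@D_eq0 R kF psi T r h) /csq /= expr0n /= addr0.
    by rewrite mulr_ge0 ?sqr_ge0 // mulr_ge0 ?sqr_ge0 ?csq_ge0.
  rewrite (@D_eq R kF psi T r (hcard _ h)) csqM mulrA.
  apply: ler_wpM2r; first exact: csq_ge0.
  have h1 := Ex_ge0 R kF r T; have h2 := Ex_le R kF r T; have h3 := kinw_ge0 R T.
  rewrite -/n in h2; rewrite sqrrN -exprMn.
  have h4 : Ex R kF r T <= n * (1 + kinw R T) by nra.
  rewrite !expr2; nra.
- apply: esum_scale_lt => //; first exact: sqr_ge0.
  by move=> T; rewrite mulr_ge0 ?sqr_ge0 ?csq_ge0.
- move=> r T hr.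
  have [h|h] := eqVneq (psi T) 0; first by rewrite (@D_eq0 R kF psi T r h) /csq /= expr0n /= addr0.
  rewrite (@D_eq R kF psi T r (hcard _ h)) (@Ex_zero R kF r T hr) oppr0 csqM expr0n /= mul0r //.
Qed.
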